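(* Let $g\ge 2$ be an integer, let $\alpha_1,\dots,\alpha_{2g-1},\alpha$ be mutually distinct complex numbers, put $F_0(z)=\big(\prod_{j=1}^{2g-1}(1-\alpha_j z^2)\big)^{1/2}\in\mathbb{C}[[z]]$ (the branch with $F_0(0)=1$), and let $y_0\in\mathbb{C}$ satisfy $y_0^2=\prod_{j=1}^{2g-1}(\alpha-\alpha_j)$ (so $y_0\neq 0$). Let $X$ be the frame whose $k$-th column is the Laurent series $f_k$, where $f_1=\dfrac{z^g}{1-\alpha z^2}$, $f_k=z^{g-2(k-1)}$ for $2\le k\le g$, $f_{g+2i+1}=z^{-g-2i}$ and $f_{g+2i+2}=z^{-g-2i-1}F_0(z)$ for $i\ge 0$; and for $\epsilon\in\{+,-\}$ let $Y^\epsilon$ be the frame whose $k$-th column is $h^\epsilon_k$, where $h^\epsilon_k=z^{g-2k}$ for $1\le k\le g-1$, $h^\epsilon_g=z^{-g+1}\dfrac{F_0(z)+\epsilon\, y_0 z^{2g-1}}{1-\alpha z^2}$, $h^\epsilon_{g+2i+1}=z^{-g-2i}$ and $h^\epsilon_{g+2i+2}=z^{-g-1-2i}F_0(z)$ for $i\ge 0$. Then, as formal power series in $t=(t_1,t_2,\dots)$, $$\tau(t;X)=(-1)^{g-1}(2y_0)^{-1}\big(\tau(t;Y^+)-\tau(t;Y^-)\big).$$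
   Context: Laurent series in $z$ are identified with coefficient column vectors via the basis $e_i=z^{i+1}$, $i\in\mathbb{Z}$: a series $\sum_i \xi_i e_i$ is the column $(\xi_i)_{i\in\mathbb{Z}}$. A frame $\xi=[\dots,\upsilon_3,\upsilon_2,\upsilon_1]$ is thus a $\mathbb{Z}\times\mathbb{N}$ matrix $(\xi_{i,j})$ whose $j$-th column is $\upsilon_j$; the frames above satisfy $\upsilon_j=e_{-j}+\sum_{i>-j}\xi_{i,j}e_i$ for all large $j$, so the infinite determinants below are well defined. For a partition $\lambda=(\lambda_1,\lambda_2,\dots)$ (padded with zeros) let $m_i=\lambda_i-i$ and define the Plücker coordinate $\xi_\lambda=\det(\xi_{m_i,j})_{i,j\in\mathbb{N}}$. Schur functions: $\exp(\sum_{i\ge1}t_ik^i)=\sum_{i\ge0}s_{(i)}(t)k^i$, and $s_\lambda(t)=\det(s_{(\lambda_i-i+j)}(t))_{1\le i,j\le l}$ for $\lambda=(\lambda_1,\dots,\lambda_l)$ (with $s_{(n)}=0$ for $n<0$). The tau function of a frame $\xi$ is $\tau(t;\xi)=\sum_\lambda \xi_\lambda s_\lambda(t)$, the sum over all partitions. *)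

(* Defs.v *)
From HB Require Import structures.
From mathcomp Require Import all_boot all_order all_algebra.
From mathcomp Require Import mpoly.
From Stdlib Require Import ClassicalEpsilon.

Set Implicit Arguments.
Unset Strict Implicit.
Unset Printing Implicit Defensive.

Import Order.TTheory GRing.Theory Num.Theory.
Local Open Scope ring_scope.

Section TauDefs.
Variable C : numClosedFieldType.

Definition ps := nat -> C.
Definition psadd (a b : ps) : ps := fun n => a n + b n.
Definition psscale (c : C) (a : ps) : ps := fun n => c * a n.
Definition psmul (a b : ps) : ps := fun n => \sum_(k < n.+1) a k * b (n - k)%N.
Definition psX (a : nat) : ps := fun n => (n == a)%:R.
Definition ps_1mz2 (a : C) : ps := fun n => (n == 0%N)%:R - a * (n == 2%N)%:R.
(* 1/(1 - a z^2) = sum_k a^k z^(2k) *)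
Definition ps_geom2 (a : C) : ps := fun n => if odd n then 0 else a ^+ n./2.
Definition ps_prod1mz2 (s : seq C) : ps :=
  foldr (fun a p => psmul (ps_1mz2 a) p) (psX 0) s.
Definition is_sqrt1 (P F : ps) : Prop := F 0%N = 1 /\ (forall n, psmul F F n = P n).
Definition ps_sqrt1 (P : ps) : ps :=
  epsilon (inhabits (fun _ : nat => 0 : C)) (is_sqrt1 P).

Definition ls := int -> C.
(* z^a * p(z) *)
Definition lshift (a : int) (p : ps) : ls :=
  fun n => match (n - a)%R with Posz k => p k | Negz _ => 0 end.

(* xi i j = xi_{i,j} = coefficient of e_i = z^(i+1) in the j-th column v_j
   (columns are indexed by j >= 1; the value at j = 0 is unused). *)
Definition frame := int -> nat -> C.
Definition frame_of_cols (f : nat -> ls) : frame := fun i j => f j (i + 1)%R.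

Definition part_m (la : seq nat) (i : nat) : int := (nth 0%N la i.-1)%:Z - i%:Z.

Definition pl_minor (xi : frame) (la : seq nat) (M : nat) : C :=
  \det (\matrix_(i < M, j < M) xi (part_m la i.+1) j.+1).

(* Pluecker coordinate: the infinite determinant det(xi_{m_i,j})_{i,j in N},
   i.e. the eventual (stable) value of its leading principal truncations. *)
Definition plucker (xi : frame) (la : seq nat) : C :=
  epsilon (inhabits 0)
    (fun c => exists M0, forall M, (M0 <= M)%N -> pl_minor xi la M = c).

(* ---------- Schur functions, restricted to t_1..t_N (t_k = 0 for k > N) ------ *)
(* variable 'X_i (i : 'I_N) stands for t_{i+1} *)
Definition mweight N (m : 'X_{1..N}) : nat := (\sum_(i < N) i.+1 * m i)%N.
Definition mfact N (m : 'X_{1..N}) : C := \prod_(i < N) ((m i)`!)%:R.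

(* s_(n)(t): coefficient of k^n in exp(sum_i t_i k^i) = prod_i sum_m t_i^m k^(i m)/m! *)
Definition schur1 N (n : int) : {mpoly C[N]} :=
  match n with
  | Posz k => \sum_(m : 'X_{1..N < k.+1} | mweight m == k) (mfact m)^-1 *: 'X_[m]
  | Negz _ => 0
  end.

Definition is_partition (la : seq nat) : bool := sorted geq la && all (fun x => 0 < x)%N la.

Definition schur N (la : seq nat) : {mpoly C[N]} :=
  \det (\matrix_(i < size la, j < size la)
          schur1 N ((nth 0%N la i)%:Z - i%:Z + j%:Z)).

Definition fsum (T : eqType) (f : T -> C) : C :=
  epsilon (inhabits 0) (fun c => exists s : seq T,
     [/\ uniq s, (forall x, f x != 0 -> x \in s) & c = \sum_(x <- s) f x]).

(* coefficient of the monomial t^m (m involving only t_1..t_N) in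
   tau(t; xi) = sum_lambda xi_lambda s_lambda(t) *)
Definition tau (xi : frame) N (m : 'X_{1..N}) : C :=
  fsum (fun la : seq nat =>
          if is_partition la then plucker xi la * (schur N la)@_m else 0).

Definition F0 (alphas : seq C) : ps := ps_sqrt1 (ps_prod1mz2 alphas).

(* columns k >= g+1 common to X and Y^eps:
   f_{g+2i+1} = z^{-g-2i},  f_{g+2i+2} = z^{-g-2i-1} F0 *)
Definition tail_col (alphas : seq C) (g k : nat) : ls :=
  let r := (k - g - 1)%N in
  let i := r./2 in
  if odd r then lshift (- (g + 2 * i + 1)%N%:Z) (F0 alphas)
  else lshift (- (g + 2 * i)%N%:Z) (psX 0).

Definition colX (alphas : seq C) (alpha : C) (g k : nat) : ls :=
  if k == 1%N then lshift g%:Z (ps_geom2 alpha)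
  else if (k <= g)%N then lshift (g%:Z - 2 * (k%:Z - 1)) (psX 0)
  else tail_col alphas g k.

Definition frameX alphas alpha g : frame := frame_of_cols (colX alphas alpha g).

(* eps = true for +, false for - *)
Definition colY (alphas : seq C) (alpha y0 : C) (g : nat) (eps : bool) (k : nat) : ls :=
  if (k <= g - 1)%N then lshift (g%:Z - 2 * k%:Z) (psX 0)
  else if k == g then
    lshift (1 - g%:Z)
      (psmul (psadd (F0 alphas)
                    (psscale ((if eps then 1 else -1) * y0) (psX (2 * g - 1))))
             (ps_geom2 alpha))
  else tail_col alphas g k.

Definition frameY alphas alpha y0 g eps : frame :=
  frame_of_cols (colY alphas alpha y0 g eps).

End TauDefs.

(* Main.v *)
Require Import Defs.
From HB Require Import structures.
From mathcomp Require Import all_boot all_order all_algebra all_fingroup.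
From mathcomp Require Import mpoly.
From mathcomp Require Import zify ring.
From Stdlib Require Import ClassicalEpsilon.
Import Order.TTheory GRing.Theory Num.Theory.
Local Open Scope ring_scope.


Section S.
Variable C : numClosedFieldType.

Lemma lshiftE (a : int) (p : ps C) n :
  Defs.lshift a p n = if (a <= n)%R then p `|n - a|%N else 0.
Proof.
rewrite /Defs.lshift; case E: (n - a) => [k|k]; case: ifP => H //.
- exfalso; move: H E; lia.
- exfalso; move: H E; lia.
Qed.

Lemma psmulD (a b c : ps C) n : psmul (psadd a b) c n = psmul a c n + psmul b c n.
Proof. by rewrite /psmul -big_split /=; apply: eq_bigr => i _; rewrite /psadd mulrDl. Qed.

Lemma psmulZ (x : C) (a b : ps C) n : psmul (psscale x a) b n = x * psmul a b n.
Proof. by rewrite /psmul mulr_sumr; apply: eq_bigr => i _; rewrite /psscale mulrA. Qed.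

Lemma psmulX a (b : ps C) n : psmul (psX C a) b n = if (a <= n)%N then b (n - a)%N else 0.
Proof.
rewrite /psmul (eq_bigr (fun i : 'I_n.+1 => if (i == a :> nat) then b (n - a)%N else 0)).
  by rewrite -big_mkcond /= (big_ord1_eq _ (fun _ => b (n - a)%N)) ltnS.
by move=> i _; rewrite /psX; case: eqP => [->|_]; rewrite ?mul1r ?mul0r.
Qed.

Lemma psmul0 (a b : ps C) : psmul a b 0 = a 0%N * b 0%N.
Proof. by rewrite /psmul big_ord1. Qed.


Fixpoint sqseq (P : ps C) (n : nat) : seq C :=
  if n is n'.+1 then let s := sqseq P n' in
     rcons s ((P n - \sum_(1 <= k < n) s`_k * s`_(n - k)) / 2)
  else [:: 1].

Lemma size_sqseq P n : size (sqseq P n) = n.+1.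
Proof. by elim: n => //= n IH; rewrite size_rcons IH. Qed.

Lemma sqseq_prefix P k n : (k <= n)%N -> (sqseq P n)`_k = (sqseq P k)`_k.
Proof.
elim: n => [|n IH]; first by rewrite leqn0 => /eqP ->.
rewrite leq_eqVlt => /orP [/eqP -> //| H].
by rewrite /= nth_rcons size_sqseq H IH.
Qed.

Definition sqF P k := (sqseq P k)`_k.

Lemma sqF_spec P : P 0%N = 1 -> is_sqrt1 P (sqF P).
Proof.
move=> P0; split => // n; case: n => [|n]; first by rewrite psmul0 /sqF /= mul1r.
rewrite /psmul big_ord_recl big_ord_recr /=.
have F0 : sqF P 0 = 1 by [].
rewrite subn0 subnn F0 mul1r mulr1.
have -> : sqF P n.+1 = (P n.+1 - \sum_(1 <= k < n.+1) sqF P k * sqF P (n.+1 - k)) / 2.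
  rewrite /sqF /= nth_rcons size_sqseq ltnn eqxx; congr ((_ - _) / _).
  rewrite big_nat_cond [RHS]big_nat_cond; apply: eq_bigr => k /andP [/andP [k1 kn] _].
  rewrite !sqseq_prefix //; last by rewrite leq_subLR; lia.
rewrite big_add1 /= big_mkord.
set S := \sum_(i < n) _.
have h2 : (2 : C) != 0 by rewrite pnatr_eq0.
by field.
Qed.

Lemma ps_prod0 (s : seq C) : ps_prod1mz2 s 0%N = 1.
Proof.
elim: s => [|a s IH] /=; first by [].
by rewrite psmul0 IH /ps_1mz2 /= mulr0 subr0 mulr1.
Qed.

Lemma F0_0 (s : seq C) : F0 s 0%N = 1.
Proof.
rewrite /F0 /ps_sqrt1.
have := epsilon_spec (inhabits (fun _ : nat => 0 : C)) (is_sqrt1 (ps_prod1mz2 s)).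
case => [|-> //]; exists (sqF (ps_prod1mz2 s)); exact: sqF_spec (ps_prod0 s).
Qed.

End S.


Section S.
Variable C : numClosedFieldType.

Definition mcols (f : nat -> ls C) (la : seq nat) (M : nat) : 'M[C]_M :=
  \matrix_(i < M, j < M) f j.+1 (part_m la i.+1 + 1).

Lemma pl_minorE f la M : pl_minor (frame_of_cols f) la M = \det (mcols f la M).
Proof. by []. Qed.

Lemma mcols_ext f h la M : (forall j n, (1 <= j <= M)%N -> f j n = h j n) ->
  mcols f la M = mcols h la M.
Proof. by move=> H; apply/matrixP => i j; rewrite !mxE; apply: H; rewrite ltn_ord. Qed.

Lemma mcols_lin (A B V : nat -> ls C) c la M J :
  (1 <= J <= M)%N ->
  (forall j n, j != J -> A j n = B j n /\ V j n = B j n) ->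
  (forall n, A J n = B J n + c * V J n) ->
  \det (mcols A la M) = \det (mcols B la M) + c * \det (mcols V la M).
Proof.
move=> /andP [J1 JM] HO HJ.
have JM' : (J.-1 < M)%N by lia.
pose J' := Ordinal JM'.
rewrite !(expand_det_col _ J') mulr_sumr -big_split /=; apply: eq_bigr => i _.
have cofA : cofactor (mcols A la M) i J' = cofactor (mcols B la M) i J'.
  rewrite /cofactor; congr (_ * \det _); apply/matrixP => k l; rewrite !mxE.
  have ne : (lift J' l).+1 != J.
    have := neq_lift J' l; rewrite -(inj_eq val_inj) /= => h.
    by apply: contra h => /eqP E; apply/eqP; lia.
  by case: (HO _ (part_m la (lift i k).+1 + 1) ne) => -> _.
have cofV : cofactor (mcols V la M) i J' = cofactor (mcols B la M) i J'.
  rewrite /cofactor; congr (_ * \det _); apply/matrixP => k l; rewrite !mxE.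
  have ne : (lift J' l).+1 != J.
    have := neq_lift J' l; rewrite -(inj_eq val_inj) /= => h.
    by apply: contra h => /eqP E; apply/eqP; lia.
  by case: (HO _ (part_m la (lift i k).+1 + 1) ne) => _ ->.
rewrite cofA cofV !mxE /=.
have -> : J.-1.+1 = J by lia.
rewrite HJ; ring.
Qed.

Lemma mcols_swap (f h : nat -> ls C) la M s :
  (1 <= s)%N -> (s < M)%N ->
  (forall n, h s n = f s.+1 n) -> (forall n, h s.+1 n = f s n) ->
  (forall j n, j != s -> j != s.+1 -> h j n = f j n) ->
  \det (mcols h la M) = - \det (mcols f la M).
Proof.
move=> s1 sM H1 H2 H3.
have a1 : (s.-1 < M)%N by lia.
have a2 : (s < M)%N by lia.
pose J1 := Ordinal a1; pose J2 := Ordinal a2.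
have -> : mcols h la M = xcol J1 J2 (mcols f la M).
  apply/matrixP => i j; rewrite !mxE.
  case: (tpermP J1 J2 j) => [->|->|nj1 nj2] /=.
  - have -> : s.-1.+1 = s by lia. by rewrite H1.
  - have -> : s.-1.+1 = s by lia. by rewrite H2.
  - by apply: H3; apply/eqP => E; [apply: nj1 | apply: nj2]; apply/val_inj => /=; lia.
rewrite xcolE det_mulmx /tperm_mx det_perm odd_tperm.
have -> : (J1 != J2) = true by apply/eqP => /(congr1 val) /=; lia.
by rewrite expr1 mulrN1.
Qed.


Lemma mcols_stable (f : nat -> ls C) la K :
  (forall j (n : int), (1 <= j)%N -> (n < 1 - j%:Z)%R -> f j n = 0) ->
  (forall j, (K < j)%N -> f j (1 - j%:Z) = 1) ->
  forall M, (K <= M)%N -> (size la <= M)%N ->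
  \det (mcols f la M.+1) = \det (mcols f la M).
Proof.
move=> Hlow Hdiag M KM laM.
have pm : part_m la M.+1 + 1 = - M%:Z.
  by rewrite /part_m /= nth_default //; lia.
rewrite (expand_det_row _ ord_max) big_ord_recr /=.
rewrite big1 ?add0r; last first.
  move=> j _; rewrite /mcols !mxE /= pm Hlow ?mul0r //; have := ltn_ord j; lia.
rewrite {1}/mcols !mxE /= pm.
have -> : - M%:Z = 1 - (M.+1)%:Z by lia.
rewrite Hdiag; last by lia.
rewrite mul1r /cofactor /= -signr_odd addnn odd_double expr0 mul1r.
congr (\det _); apply/matrixP => i j; rewrite !mxE.
have lv : forall k : 'I_M, (lift ord_max k : nat) = k.
  by move=> k; rewrite /= /bump leqNgt ltn_ord.
by rewrite !lv.
Qed.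

Lemma mcols_stable_all (f : nat -> ls C) la M0 :
  (forall M, (M0 <= M)%N -> \det (mcols f la M.+1) = \det (mcols f la M)) ->
  forall M, (M0 <= M)%N -> \det (mcols f la M) = \det (mcols f la M0).
Proof.
move=> H M; elim: M => [|M IH]; first by rewrite leqn0 => /eqP ->.
rewrite leq_eqVlt => /orP [/eqP -> //|h].
by rewrite H ?IH //; lia.
Qed.

Lemma plucker_eq (xi : frame C) la c :
  (exists M0, forall M, (M0 <= M)%N -> pl_minor xi la M = c) -> plucker xi la = c.
Proof.
move=> Hex; rewrite /plucker.
have [M1 H1] := epsilon_spec (inhabits (0 : C))
   (fun c => exists M0, forall M, (M0 <= M)%N -> pl_minor xi la M = c) (ex_intro _ c Hex).
have [M0 H0] := Hex.
by rewrite -(H1 (maxn M0 M1)) ?leq_maxr // H0 // leq_maxl.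
Qed.

End S.


Section S.
Variable C : numClosedFieldType.
Variable N : nat.

Definition hmg (p : {mpoly C[N]}) (d : nat) := forall mm : 'X_{1..N}, Defs.mweight mm != d -> mcoeff mm p = 0.

Lemma hmg0 d : hmg 0 d.
Proof. by move=> mm _; rewrite mcoeff0. Qed.

Lemma hmgD p q d : hmg p d -> hmg q d -> hmg (p + q) d.
Proof. by move=> hp hq mm h; rewrite mcoeffD hp // hq // addr0. Qed.

Lemma hmgN p d : hmg p d -> hmg (- p) d.
Proof. by move=> hp mm h; rewrite mcoeffN hp // oppr0. Qed.

Lemma hmgZ c p d : hmg p d -> hmg (c *: p) d.
Proof. by move=> hp mm h; rewrite mcoeffZ hp // mulr0. Qed.

Lemma mweight0 : Defs.mweight (0%MM : 'X_{1..N}) = 0%N.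
Proof. by rewrite /Defs.mweight big1 // => i _; rewrite mnm0E muln0. Qed.

Lemma mweightD (m1 m2 : 'X_{1..N}) : Defs.mweight (m1 + m2)%MM = (Defs.mweight m1 + Defs.mweight m2)%N.
Proof. by rewrite /Defs.mweight -big_split /=; apply: eq_bigr => i _; rewrite mnmDE mulnDr. Qed.

Lemma hmg1 : hmg 1 0.
Proof.
move=> mm h; rewrite mcoeff1; case: eqP => // E; move: h; by rewrite E mweight0.
Qed.

Lemma hmgM p q a b : hmg p a -> hmg q b -> hmg (p * q) (a + b).
Proof.
move=> hp hq mm h; rewrite mcoeffM big1 // => k /eqP E.
have hw : Defs.mweight mm = (Defs.mweight k.1 + Defs.mweight k.2)%N by rewrite {1}E mweightD.
case: (eqVneq (Defs.mweight k.1) a) => [e1|n1]; last by rewrite hp // mul0r.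
case: (eqVneq (Defs.mweight k.2) b) => [e2|n2]; last by rewrite (hq _ n2) mulr0.
by move: h; rewrite hw e1 e2 eqxx.
Qed.

Lemma hmg_sum (I : Type) (r : seq I) (P : pred I) (F : I -> {mpoly C[N]}) d :
  (forall i, P i -> hmg (F i) d) -> hmg (\sum_(i <- r | P i) F i) d.
Proof.
move=> H; apply: (big_ind (fun p => hmg p d)); [exact: hmg0 | move=> x y; exact: hmgD | exact: H].
Qed.

Lemma hmg_schur1 k : hmg (schur1 C N (Posz k)) k.
Proof.
rewrite /schur1; apply: hmg_sum => mb /eqP hw mm h.
rewrite mcoeffZ mcoeffX; case: eqP => [E|]; last by rewrite mulr0.
by move: h; rewrite -E hw eqxx.
Qed.

Lemma hmg_sign (b : bool) : hmg ((-1) ^+ b) 0.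
Proof. by case: b; rewrite ?expr1 ?expr0; [apply: hmgN|]; exact: hmg1. Qed.

Lemma hmg_schur la : hmg (schur C N la) (sumn la).
Proof.
rewrite /schur /determinant; apply: hmg_sum => s _.
set n := size la.
pose arg (i : 'I_n) : int := (nth 0%N la i)%:Z - i%:Z + (s i : nat)%:Z.
have -> : \prod_i (\matrix_(i0 < n, j < n) schur1 C N ((nth 0%N la i0)%:Z - i0%:Z + j%:Z)) i (s i)
        = \prod_i schur1 C N (arg i) by apply: eq_bigr => i _; rewrite mxE.
case: (boolP [exists i, arg i < 0]) => [/existsP [i hi]|/existsPn hall].
  rewrite (bigD1 i) //=.
  have -> : schur1 C N (arg i) = 0 by case: (arg i) hi.
  by rewrite mul0r mulr0; exact: hmg0.
rewrite -[sumn la]add0n; apply: hmgM; first exact: hmg_sign.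
have -> : sumn la = (\sum_(i < n) `|arg i|%N)%N.
  rewrite sumnE (big_nth 0%N) big_mkord.
  apply/eqP; rewrite -(eqr_nat int) !natz; apply/eqP.
  rewrite !(big_morph Posz PoszD (erefl _)).
  have e : forall i, Posz `|arg i|%N = arg i by move=> i; rewrite gez0_abs // leNgt hall.
  rewrite (eq_bigr _ (fun i _ => e i)) /arg !big_split /=.
  have -> : \sum_(i < n) (s i : nat)%:Z = \sum_(i < n) (i : nat)%:Z by rewrite [RHS](reindex_inj (@perm_inj _ s)).
  by rewrite -addrA sumrN addNr addr0.
apply: (big_ind2 (fun p d => hmg p d)) => //.
- exact: hmg1.
- by move=> ? ? ? ? ? ?; exact: hmgM.
- move=> i _.
  have : 0 <= arg i by have := hall i; rewrite -leNgt.
  by case: (arg i) => // k _; exact: hmg_schur1.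
Qed.

End S.

Fixpoint allseq (n w : nat) : seq (seq nat) :=
  if n is n'.+1 then [::] :: [seq x :: s | x <- iota 0 w.+1, s <- allseq n' w]
  else [:: [::]].

Lemma mem_allseq n w s : (size s <= n)%N -> all (fun x => x <= w)%N s -> s \in allseq n w.
Proof.
elim: n s => [|n IH] [|x s] // hs /andP [hx ha].
have H1 : x :: s \in [seq y :: t | y <- iota 0 w.+1, t <- allseq n w].
  by apply: (allpairs_f (fun y t => y :: t)); [rewrite mem_iota; lia | apply: IH].
by rewrite in_cons; apply/orP; right; exact: H1.
Qed.

Lemma pos_size (s : seq nat) : all (fun x => 0 < x)%N s -> (size s <= sumn s)%N.
Proof. by elim: s => //= x s IH /andP [hx /IH]; lia. Qed.

Lemma le_sumn (s : seq nat) : all (fun x => x <= sumn s)%N s.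
Proof.
elim: s => //= x s IH; rewrite leq_addr /=.
by apply: sub_all IH => y /= h; lia.
Qed.

Section T.
Variable C : numClosedFieldType.

Lemma fsumE (T : eqType) (f : T -> C) s :
  uniq s -> (forall x, f x != 0 -> x \in s) -> fsum f = \sum_(x <- s) f x.
Proof.
move=> us hs; rewrite /fsum.
have [s' [us' hs' ->]] := epsilon_spec (inhabits (0 : C))
   (fun c => exists s : seq T,
     [/\ uniq s, (forall x, f x != 0 -> x \in s) & c = \sum_(x <- s) f x])
   (ex_intro _ _ (ex_intro _ s (And3 us hs (erefl _)))).
have red : forall r, \sum_(x <- r) f x = \sum_(x <- [seq x <- r | f x != 0]) f x.
  move=> r; rewrite big_filter [RHS]big_mkcond /=; apply: eq_bigr => x _.
  by case: eqP => // ->.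
rewrite (red s) (red s'); apply: perm_big; apply: uniq_perm; rewrite ?filter_uniq // => x.
rewrite !mem_filter; case: (boolP (f x != 0)) => //= h.
by rewrite hs // hs'.
Qed.

Definition Sset (w : nat) := undup (allseq w w).

Lemma tau_supp (xi : frame C) N (m : 'X_{1..N}) la :
  (if is_partition la then plucker xi la * (schur C N la)@_m else 0) != 0 ->
  la \in Sset (Defs.mweight m).
Proof.
rewrite /is_partition; case: ifP => [/andP [_ hpos] h|]; last by rewrite eqxx.
have hw : Defs.mweight m = sumn la.
  apply/eqP; apply: contraTT h => hne; rewrite negbK.
  by rewrite (@hmg_schur C N la _ hne) mulr0.
rewrite /Sset mem_undup hw; apply: mem_allseq; [exact: pos_size | exact: le_sumn].
Qed.

Lemma tau_comb (xi a b : frame C) N (m : 'X_{1..N}) c :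
  (forall la, plucker xi la = c * (plucker a la - plucker b la)) ->
  tau xi m = c * (tau a m - tau b m).
Proof.
move=> H; rewrite /tau !(@fsumE _ _ (Sset (Defs.mweight m))) ?undup_uniq //;
  try by move=> la; apply: tau_supp.
rewrite -sumrB mulr_sumr; apply: eq_bigr => la _.
by case: ifP => _; rewrite ?H; ring.
Qed.

End T.


Arguments mcols {C}.
Arguments pl_minorE {C}.
Arguments mcols_ext {C}.
Arguments mcols_lin {C}.
Arguments mcols_swap {C}.
Arguments mcols_stable {C}.
Arguments mcols_stable_all {C}.
Arguments plucker_eq {C}.
Arguments lshiftE {C}.
Arguments psmulD {C}.
Arguments psmulZ {C}.
Arguments psmulX {C}.
Arguments F0_0 {C}.
Arguments tau_comb {C}.

Section E.
Variable C : numClosedFieldType.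
Variables (g : nat) (alphas : seq C) (alpha y0 : C).
Hypothesis g2 : (2 <= g)%N.

Definition uu : ls C := Defs.lshift (1 - g%:Z) (psmul (F0 alphas) (ps_geom2 alpha)).
Definition vv : ls C := Defs.lshift g%:Z (ps_geom2 alpha).
Definition ww (k : nat) : ls C := if k == g then vv else colY alphas alpha y0 g true k.
Definition BB (k : nat) : ls C := if k == g then uu else colY alphas alpha y0 g true k.
Definition GG (s k : nat) : ls C :=
  if (k < s)%N then ww k else if k == s then ww g else if (k <= g)%N then ww k.-1 else ww k.

Lemma colY_g eps n :
  colY alphas alpha y0 g eps g n = uu n + ((if eps then 1 else -1) * y0) * vv n.
Proof.
rewrite /colY.
have -> : (g <= g - 1)%N = false by lia.
rewrite eqxx /uu /vv !lshiftE.
case h1: (1 - g%:Z <= n)%R; case h2: (g%:Z <= n)%R.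
- rewrite psmulD psmulZ psmulX.
  have -> : (2 * g - 1 <= `|(n - (1 - g%:Z))%R|)%N = true by lia.
  have -> : (`|(n - (1 - g%:Z))%R| - (2 * g - 1))%N = `|(n - g%:Z)%R|%N by lia.
  by [].
- rewrite psmulD psmulZ psmulX.
  have -> : (2 * g - 1 <= `|(n - (1 - g%:Z))%R|)%N = false by lia.
  by rewrite !mulr0.
- exfalso; lia.
- by rewrite !mulr0 addr0.
Qed.

Lemma colY_ng eps k n : k != g ->
  colY alphas alpha y0 g eps k n = colY alphas alpha y0 g true k n.
Proof. by move=> hk; rewrite /colY (negbTE hk). Qed.


Lemma detY_diff la M : (g <= M)%N ->
  \det (mcols (colY alphas alpha y0 g true) la M) -
  \det (mcols (colY alphas alpha y0 g false) la M) =
  2 * y0 * \det (mcols ww la M).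
Proof.
move=> gM.
have g1 : (1 <= g <= M)%N by lia.
have HO : forall eps j n, j != g ->
    colY alphas alpha y0 g eps j n = BB j n /\ ww j n = BB j n.
  by move=> eps j n hj; rewrite /BB /ww (negbTE hj) colY_ng.
rewrite (@mcols_lin C _ BB ww y0 _ _ g g1 (HO true)); last first.
  by move=> n; rewrite colY_g /BB /ww eqxx mul1r.
rewrite (@mcols_lin C _ BB ww (- y0) _ _ g g1 (HO false)); last first.
  by move=> n; rewrite colY_g /BB /ww eqxx mulN1r.
ring.
Qed.

Lemma GG_g k n : GG g k n = ww k n.
Proof.
rewrite /GG; case: ltnP => // h1; case: eqP => [->//|h2].
by have -> : (k <= g)%N = false by apply/negbTE; rewrite -ltnNge; lia.
Qed.

Lemma GG_swap la M s : (1 <= s)%N -> (s < g)%N -> (g <= M)%N ->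
  \det (mcols (GG s) la M) = - \det (mcols (GG s.+1) la M).
Proof.
move=> s1 sg gM; apply: (@mcols_swap C (GG s.+1) (GG s) la M s) => //; first by lia.
- by move=> n; rewrite /GG !ltnn !eqxx.
- move=> n; rewrite /GG ltnSn.
  have -> : (s.+1 < s)%N = false by lia.
  have -> : (s.+1 == s) = false by lia.
  by have -> : (s < g)%N = true by lia.
- move=> j n h1 h2; rewrite /GG (negbTE h1) (negbTE h2).
  case: (ltnP j s) => hj.
    by have -> : (j < s.+1)%N = true by lia.
  by have -> : (j < s.+1)%N = false by lia.
Qed.

Lemma GG_cycle la M : (g <= M)%N ->
  \det (mcols (GG 1) la M) = (-1) ^+ (g - 1) * \det (mcols ww la M).
Proof.
move=> gM.
have H : forall t, (t < g)%N -> \det (mcols (GG (g - t)) la M) = (-1) ^+ t * \det (mcols ww la M).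
  elim => [|t IH] ht.
    by rewrite subn0 expr0 mul1r; congr (\det _); apply: mcols_ext => j n _; rewrite GG_g.
  have -> : (g - t.+1)%N = (g - t).-1 by lia.
  rewrite GG_swap; [|lia|lia|by []].
  have -> : (g - t).-1.+1 = (g - t)%N by lia.
  by rewrite IH; [rewrite exprS; ring | lia].
have e : (g - (g - 1))%N = 1%N by lia.
by have := H (g - 1)%N; rewrite e; apply; lia.
Qed.

Lemma colX_GG k n : (1 <= k)%N -> colX alphas alpha g k n = GG 1 k n.
Proof.
move=> k1; rewrite /colX /GG.
have -> : (k < 1)%N = false by lia.
case hk1: (k == 1%N).
  by rewrite /ww eqxx.
case: ifP => hkg.
  rewrite /ww.
  have -> : (k.-1 == g) = false by lia.
  rewrite /colY.
  have -> : (k.-1 <= g - 1)%N = true by lia.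
  by congr (Defs.lshift _ _ _); lia.
rewrite /ww.
have -> : (k == g) = false by lia.
rewrite /colY.
have -> : (k <= g - 1)%N = false by lia.
by have -> : (k == g) = false by lia.
Qed.


Lemma tail_colE k : (g < k)%N ->
  tail_col alphas g k = Defs.lshift (1 - k%:Z) (if odd (k - g - 1) then F0 alphas else psX C 0).
Proof.
move=> gk; rewrite /tail_col.
have hr := odd_double_half (k - g - 1).
move: hr; set r := (k - g - 1)%N; set h := r./2; rewrite -mul2n.
by case: (odd r) => /= hr; congr Defs.lshift; lia.
Qed.

Lemma colY_low eps j (n : int) : (1 <= j)%N -> (n < 1 - j%:Z)%R ->
  colY alphas alpha y0 g eps j n = 0.
Proof.
move=> j1 hn; rewrite /colY.
case: ifP => h1; first by rewrite lshiftE; case: ifP => //; lia.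
case: ifP => h2; first by rewrite lshiftE; case: ifP => //; move/eqP: h2 => h2; lia.
rewrite tail_colE; last by lia.
by rewrite lshiftE; case: ifP => //; lia.
Qed.

Lemma colY_diag eps j : (g < j)%N -> colY alphas alpha y0 g eps j (1 - j%:Z) = 1.
Proof.
move=> gj; rewrite /colY.
have -> : (j <= g - 1)%N = false by lia.
have -> : (j == g) = false by lia.
rewrite tail_colE // lshiftE lexx subrr /=.
by case: ifP => _; [exact: F0_0 | by []].
Qed.

Lemma plucker_Y eps la M : (maxn g (size la) <= M)%N ->
  plucker (frameY alphas alpha y0 g eps) la = pl_minor (frameY alphas alpha y0 g eps) la M.
Proof.
move=> hM.
have st := mcols_stable (colY alphas alpha y0 g eps) la g (colY_low eps) (colY_diag eps).
have sa := mcols_stable_all (colY alphas alpha y0 g eps) la (maxn g (size la))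
   (fun M h => st M (leq_trans (leq_maxl _ _) h) (leq_trans (leq_maxr _ _) h)).
rewrite pl_minorE sa //.
apply: plucker_eq; exists (maxn g (size la)) => M' h; exact: sa.
Qed.

End E.

Theorem theorem2 (C : numClosedFieldType) (g : nat) (alphas : seq C) (alpha y0 : C) :
  (2 <= g)%N ->
  size alphas = (2 * g - 1)%N ->
  uniq (alpha :: alphas) ->
  y0 ^+ 2 = \prod_(a <- alphas) (alpha - a) ->
  forall (N : nat) (m : 'X_{1..N}),
    tau (frameX alphas alpha g) m =
    (-1) ^+ (g - 1) * (2 * y0)^-1 *
      (tau (frameY alphas alpha y0 g true) m - tau (frameY alphas alpha y0 g false) m).
Proof.
move=> g2 _ hu hy N m.
have y0n : y0 != 0.
  move: hu => /= /andP [hn _].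
  have : \prod_(a <- alphas) (alpha - a) != 0.
    rewrite prodf_seq_neq0; apply/allP => a ha /=.
    by rewrite subr_eq0; apply: contraNN hn => /eqP ->.
  by rewrite -hy; apply: contraNN => /eqP ->; rewrite expr0n.
have h2 : (2 : C) != 0 by rewrite pnatr_eq0.
apply: tau_comb => la.
apply: plucker_eq; exists (maxn g (size la)) => M hM.
rewrite (@plucker_Y C g alphas alpha y0 g2 true la M hM) (@plucker_Y C g alphas alpha y0 g2 false la M hM).
have gM : (g <= M)%N by apply: leq_trans hM; exact: leq_maxl.
rewrite !pl_minorE detY_diff //.
rewrite (mcols_ext _ (@GG C g alphas alpha y0 1)); last by move=> j n /andP [j1 _]; exact: colX_GG.
rewrite GG_cycle //.
by field.
Qed.
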